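(* In the symmetric-ordering setup, for every $w\ge2$ and all indices $\mu,\alpha_1,\ldots,\alpha_w$, $$\sum_{\sigma\in\Sigma_w}[\ldots[[\hat\partial^\mu,\hat x_{\alpha_{\sigma(1)}}],\hat x_{\alpha_{\sigma(2)}}],\ldots,\hat x_{\alpha_{\sigma(w)}}](1)=0\quad\text{in }U(\mathfrak g).$$
   Context: Symmetric-ordering setup: $\Bbbk$ is a field of characteristic $0$, $\mathfrak g$ an $n$-dimensional Lie algebra with basis $\hat x_1,\ldots,\hat x_n$; $\hat x_\alpha$ also denotes left multiplication by $\hat x_\alpha$ on $U(\mathfrak g)$, and commutators are taken in $\mathrm{End}_\Bbbk(U(\mathfrak g))$. $S(\mathfrak g)=\Bbbk[x_1,\ldots,x_n]$; the coexponential map $\xi:S(\mathfrak g)\to U(\mathfrak g)$ is the linear isomorphism $\xi(x_{\alpha_1}\cdots x_{\alpha_k})=\frac1{k!}\sum_{\sigma\in\Sigma_k}\hat x_{\alpha_{\sigma(1)}}\cdots\hat x_{\alpha_{\sigma(k)}}$; $\hat\partial^\mu\in\mathrm{End}_\Bbbk(U(\mathfrak g))$ is defined by $\hat\partial^\mu(\xi(f))=\xi(\partial f/\partial x_\mu)$. $\Sigma_w$ is the symmetric group; $1$ is the unit of $U(\mathfrak g)$. *)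

(* Defs.v *)
From HB Require Import structures.
From mathcomp Require Import all_boot all_order all_algebra all_fingroup.
Set Implicit Arguments. Unset Strict Implicit. Unset Printing Implicit Defensive.
Import Order.TTheory GRing.Theory Num.Theory.
Local Open Scope ring_scope.

Section SymOrd.
Variables (k : fieldType) (A : algType k) (n : nat) (x : 'I_n -> A).

Definition symprod (m : nat) (t : m.-tuple 'I_n) : A :=
  (m`!%:R)^-1 *: \sum_(s : 'S_m) \prod_(i < m) x (tnth t (s i)).

Definition symseq (s : seq 'I_n) : A := symprod (in_tuple s).

(* the multiset (monomial of S(g)) represented by a word *)
Definition monkey (s : seq 'I_n) : {ffun 'I_n -> nat} := [ffun i => count_mem i s].

Definition dropi (m : nat) (t : m.+1.-tuple 'I_n) (i : 'I_m.+1) : m.-tuple 'I_n :=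
  [tuple tnth t (lift i j) | j < m].

(* commutator [D, \hat x_a] in End(A), \hat x_a = left multiplication *)
Definition commx (D : A -> A) (a : 'I_n) : A -> A :=
  fun u => D (x a * u) - x a * D u.

Definition nested_comm (D : A -> A) (s : seq 'I_n) : A -> A :=
  foldl commx D s.

End SymOrd.

(* Main.v *)
Require Import Defs.
From HB Require Import structures.
From mathcomp Require Import all_boot all_order all_algebra all_fingroup.
From Stdlib Require Import Lia.
Import GRing.Theory.
Local Open Scope ring_scope.

Fixpoint bits (k : nat) : seq (seq bool) :=
  if k is k'.+1 then flatten [seq [:: rcons m true; rcons m false] | m <- bits k']
  else [:: [::]].

Lemma size_bits k m : m \in bits k -> size m = k.
Proof.
elim: k m => [|k IH] m /=; first by rewrite inE => /eqP ->.
move=> /flattenP [r /mapP [m' Hm' ->]]; rewrite !inE => /orP [] /eqP ->;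
  by rewrite size_rcons (IH _ Hm').
Qed.

Section Expand.
Variables (k : fieldType) (U : algType k) (n : nat) (x : 'I_n -> U).

Definition P (s : seq 'I_n) : U := \prod_(a <- s) x a.

Lemma P_cat s1 s2 : P (s1 ++ s2) = P s1 * P s2.
Proof. by rewrite /P big_cat. Qed.

Lemma P_cons a s : P (a :: s) = x a * P s.
Proof. by rewrite /P big_cons. Qed.

Lemma P_rcons s a : P (rcons s a) = P s * x a.
Proof. by rewrite -cats1 P_cat /P big_seq1. Qed.

Lemma expand (D0 : U -> U) s u :
  foldl (commx x) D0 s u = \sum_(m <- bits (size s))
    ((-1) ^+ count negb m : k) *: (P (rev (mask (map negb m) s)) * D0 (P (mask m s) * u)).
Proof.
elim/last_ind: s u => [|s a IH] u.
  by rewrite /= big_seq1 /= expr0 scale1r /P /= !big_nil mul1r mul1r.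
rewrite foldl_rcons /commx !IH size_rcons /= big_flatten /= big_map.
rewrite mulr_sumr -sumrN -big_split /=; apply: eq_big_seq => m /size_bits Hm.
rewrite big_cons big_seq1 /= -!cats1 !count_cat /= addn0 !map_cat /=.
rewrite !mask_cat ?size_map // /= !cats0 !cats1 rev_rcons P_cons P_rcons.
rewrite !addn0 addn1 exprS mulN1r scaleNr; congr (_ + - _).
  by rewrite mulrA.
by rewrite -scalerAr !mulrA.
Qed.
End Expand.

Lemma reindex_word (n w : nat) (alpha : 'I_w -> 'I_n) (V : nmodType)
   (F : seq 'I_n -> V) (l : seq 'I_w) :
  perm_eq l (enum 'I_w) ->
  \sum_(s : 'S_w) F [seq alpha (s i) | i <- l] =
  \sum_(s : 'S_w) F [seq alpha (s i) | i <- enum 'I_w].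
Proof.
move=> Hp.
have Hsz : size l = w by rewrite (perm_size Hp) size_enum_ord.
have Hu : uniq l by rewrite (perm_uniq Hp) enum_uniq.
case: l Hp Hsz Hu => [|i0 l'] Hp Hsz Hu.
  by move: Hp; rewrite perm_sym => /perm_nilP ->.
set l := i0 :: l' in Hp Hsz Hu *.
pose f (i : 'I_w) := nth i l i.
have finj : injective f.
  move=> i j; rewrite /f (set_nth_default i0 i) ?Hsz //.
  rewrite (set_nth_default i0 j) ?Hsz // => /(uniqP i0 Hu).
  by rewrite !inE Hsz => H; apply: val_inj; apply: H.
pose pi := perm finj.
have Hl : l = [seq pi i | i <- enum 'I_w].
  apply: (@eq_from_nth _ i0); first by rewrite size_map size_enum_ord.
  move=> j Hj; rewrite (nth_map i0) ?size_enum_ord -?Hsz //.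
  rewrite permE /f nth_enum_ord -?Hsz //.
  by apply: set_nth_default.
rewrite Hl [RHS](reindex_inj (mulgI pi)) /=.
apply: eq_bigr => s _; congr F; rewrite -map_comp; apply: eq_map => i /=.
by rewrite permM.
Qed.

Section Sym.
Variables (k : fieldType) (U : algType k) (n : nat) (x : 'I_n -> U).
Hypothesis char0 : [pchar k] =i pred0.
Local Notation P := (@P k U n x).

Lemma symseq_nil : symseq x [::] = 1.
Proof.
rewrite /symseq /symprod /= fact0 invr1 scale1r; under eq_bigr do rewrite big_ord0.
by rewrite sumr_const card_Sn fact0.
Qed.

Lemma symprod_val m (t : m.-tuple 'I_n) : symprod x t = symseq x t.
Proof.
case: t => s Hs; have Hs' : size s = m by apply/eqP.
subst m.
rewrite /symseq; congr symprod; exact: val_inj.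
Qed.


Lemma fact_neq0 m : (m`!%:R : k) != 0.
Proof. by move/pcharf0P: char0 => ->; rewrite -lt0n fact_gt0. Qed.

Lemma sym_sum (a0 : 'I_n) (c : seq 'I_n) j : size c = j ->
  \sum_(t : 'S_j) P [seq nth a0 c (t i) | i <- enum 'I_j] = j`!%:R *: symseq x c.
Proof.
move=> Hs; subst j; rewrite /symseq /symprod scalerA mulfV ?fact_neq0 // scale1r.
apply: eq_bigr => t _; rewrite /P big_map enumT /index_enum /=; apply: eq_bigr => i _.
by rewrite (tnth_nth a0).
Qed.
End Sym.

Lemma dropi_val (n m : nat) (t : m.+1.-tuple 'I_n) (i : 'I_m.+1) (a0 : 'I_n) :
  val (dropi t i) = take i t ++ drop i.+1 t.
Proof.
have -> : val (dropi t i) = [seq nth a0 t (bump i j) | j <- iota 0 m].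
  rewrite /dropi /= -val_enum_ord -map_comp; apply: eq_map => j /=.
  by rewrite (tnth_nth a0).
have Hi := ltn_ord i; have Ht := size_tuple t.
apply: (@eq_from_nth _ a0).
  rewrite size_map size_iota size_cat size_take size_drop Ht Hi.
  by rewrite subSS addnC subnK // -ltnS.
move=> j; rewrite size_map size_iota => Hj.
rewrite (nth_map 0) ?size_iota // nth_iota // add0n nth_cat size_take Ht Hi.
rewrite /bump; case: ltnP => Hij.
  by rewrite add0n nth_take.
by rewrite nth_drop add1n addSn subnKC.
Qed.

Lemma perm_map_enum (T : finType) (s : {perm T}) : perm_eq [seq s i | i <- enum T] (enum T).
Proof.
apply: uniq_perm; rewrite ?enum_uniq ?(map_inj_uniq (@perm_inj _ s)) ?enum_uniq //.
move=> i; rewrite mem_enum; apply/mapP; exists (s^-1 i)%g; by rewrite ?mem_enum ?permKV.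
Qed.

Lemma map_nth_enum (T : Type) (x0 : T) (c : seq T) j : size c = j ->
  [seq nth x0 c i | i : 'I_j <- enum 'I_j] = c.
Proof.
move=> Hs; subst j; rewrite (map_comp (nth x0 c) val) val_enum_ord.
by rewrite -/(mkseq _ _) mkseq_nth.
Qed.


Lemma perm_mask_cat (T0 : eqType) (m : bitseq) (s : seq T0) : size m = size s ->
  perm_eq (mask m s ++ mask (map negb m) s) s.
Proof.
elim: s m => [|a s IH] [|b m] //= [Hm].
case: b => /=; first by rewrite perm_cons IH.
by rewrite -cat1s perm_catCA /= perm_cons IH.
Qed.

Lemma bitsS w : bits w.+1 = flatten [seq [:: rcons m true; rcons m false] | m <- bits w].
Proof. by []. Qed.

Lemma sign_sum (R : pzRingType) w : (2 <= w)%N ->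
  \sum_(m <- bits w) (((-1) ^+ count negb m : R) *+ count id m) = 0.
Proof.
have Ha : forall w', \sum_(m <- bits w'.+1) ((-1) ^+ count negb m : R) = 0.
  move=> w'; rewrite /= big_flatten /= big_map big1_seq // => m _.
  rewrite big_cons big_seq1 -!cats1 !count_cat /= !addn0 addn1 exprS mulN1r.
  by rewrite addrN.
case: w => [|[|w]] // _.
rewrite bitsS big_flatten big_map -[RHS](Ha w); apply: eq_bigr => m _.
rewrite big_cons big_seq1 -!cats1 !count_cat /= !addn0 !addn1 exprS mulN1r.
by rewrite mulrS mulNrn addrK.
Qed.

Section Main.
Variables (k : fieldType) (U : algType k) (n : nat) (x : 'I_n -> U).
Hypothesis char0 : [pchar k] =i pred0.
Variables (mu : 'I_n) (D : {linear U -> U}).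
Hypothesis D_def : forall (m : nat) (t : m.+1.-tuple 'I_n),
     D (symprod x t) = \sum_(i < m.+1) (tnth t i == mu)%:R *: symprod x (dropi t i).
Hypothesis D_one : D 1 = 0.
Local Notation P := (@P k U n x).

Lemma Dsym a c : D (symseq x (a::c)) = \sum_(i < (size c).+1)
   ((nth a (a::c) i == mu)%:R : k) *: symseq x (take i (a::c) ++ drop i.+1 (a::c)).
Proof.
rewrite {1}/symseq (@D_def (size c) (in_tuple (a::c))); apply: eq_bigr => i _.
by rewrite (tnth_nth a) symprod_val (@dropi_val _ _ _ _ a).
Qed.

Variables (w : nat) (alpha : 'I_w -> 'I_n) (i0 : 'I_w).
Local Notation wd s l := [seq alpha (s i) | i <- l].
Local Notation E := (enum 'I_w).

Lemma avg j (t : 'S_j) (F : seq 'I_n -> seq 'I_n -> U) : (j <= w)%N ->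
  \sum_(s : 'S_w) F (take j (wd s E)) (drop j (wd s E)) =
  \sum_(s : 'S_w) F [seq nth mu (take j (wd s E)) (t i) | i <- enum 'I_j] (drop j (wd s E)).
Proof.
move=> Hj.
have HE : size E = w by rewrite size_enum_ord.
pose l := [seq nth i0 E (t i) | i <- enum 'I_j] ++ drop j E.
have Hp : perm_eq l E.
  rewrite perm_sym -{1}(cat_take_drop j E) perm_cat2r perm_sym.
  have -> : [seq nth i0 E (t i) | i <- enum 'I_j] =
            [seq nth i0 (take j E) i | i : 'I_j <- [seq t i | i <- enum 'I_j]].
    by rewrite -[RHS]map_comp; apply: eq_map => i /=; rewrite nth_take.
  apply: (perm_trans (perm_map (fun i : 'I_j => nth i0 (take j E) i) (@perm_map_enum _ t))).
  by rewrite (@map_nth_enum _ i0 (take j E) j) // size_takel ?HE.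
rewrite -(@reindex_word _ _ alpha _ (fun v => F (take j v) (drop j v)) _ Hp) /l.
apply: eq_bigr => s _; rewrite map_cat map_drop.
have Hsz : size [seq alpha (s i) | i <- [seq nth i0 E (t i) | i <- enum 'I_j]] = j.
  by rewrite !size_map -enumT size_enum_ord.
rewrite take_size_cat // drop_size_cat //; congr F.
rewrite -map_comp; apply: eq_map => i /=.
have Hti : (t i < w)%N by apply: leq_trans Hj.
by rewrite nth_take // (nth_map i0) ?HE.
Qed.


Lemma Dsym' (c : seq 'I_n) m : size c = m.+1 -> D (symseq x c) = \sum_(i < m.+1)
   ((nth mu c i == mu)%:R : k) *: symseq x (take i c ++ drop i.+1 c).
Proof.
case: c => [|a c] //= [Hm]; subst m; rewrite Dsym; apply: eq_bigr => i _.
by rewrite (set_nth_default mu a) //= ltnS -ltnS.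
Qed.

Definition W j := \sum_(s : 'S_w) P (drop j (wd s E)) * D (P (take j (wd s E))).

Lemma size_wd (s : 'S_w) : size (wd s E) = w.
Proof. by rewrite size_map size_enum_ord. Qed.

Lemma W_sym j : (j <= w)%N ->
  W j = \sum_(s : 'S_w) P (drop j (wd s E)) * D (symseq x (take j (wd s E))).
Proof.
move=> Hj; apply: (scalerI (@fact_neq0 k char0 j)).
have -> : j`!%:R *: W j = \sum_(t : 'S_j) W j by rewrite sumr_const card_Sn scaler_nat.
rewrite (eq_bigr (fun t : 'S_j => \sum_(s : 'S_w)
   P (drop j (wd s E)) * D (P [seq nth mu (take j (wd s E)) (t i) | i <- enum 'I_j]))); last first.
  by move=> t _; rewrite /W (@avg j t (fun c d => P d * D (P c))).
rewrite exchange_big scaler_sumr; apply: eq_bigr => s _.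
rewrite -mulr_sumr -linear_sum (@sym_sum k U n x char0 mu) ?size_takel ?size_wd //.
by rewrite linearZ scalerAr.
Qed.

Lemma W0 : W 0 = 0.
Proof.
rewrite W_sym // big1 // => s _; by rewrite take0 symseq_nil D_one mulr0.
Qed.

Definition T := \sum_(s : 'S_w)
  ((nth mu (wd s E) w.-1 == mu)%:R : k) *: P (take w.-1 (wd s E)).

Definition T' j := \sum_(s : 'S_w)
  ((nth mu (wd s E) w.-1 == mu)%:R : k) *:
     (P (drop j (take w.-1 (wd s E))) * symseq x (take j (take w.-1 (wd s E)))).


Lemma drop_cat_le (T0 : Type) (s1 s2 : seq T0) m : (m <= size s1)%N ->
  drop m (s1 ++ s2) = drop m s1 ++ s2.
Proof.
rewrite drop_cat leq_eqVlt => /orP [/eqP ->|->] //.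
by rewrite ltnn subnn drop0 drop_size.
Qed.

Lemma move_i i j : (i <= j)%N -> (j < w)%N ->
  \sum_(s : 'S_w) ((nth mu (wd s E) i == mu)%:R : k) *:
     (P (drop j.+1 (wd s E)) * symseq x (take i (wd s E) ++ drop i.+1 (take j.+1 (wd s E))))
  = T' j.
Proof.
move=> Hij Hjw.
have HE : size E = w by rewrite size_enum_ord.
have Hiw : (i < w)%N by apply: leq_ltn_trans Hjw.
pose l := take i E ++ drop i.+1 (take j.+1 E) ++ drop j.+1 E ++ [:: nth i0 E i].
have Hp : perm_eq l E.
  rewrite perm_sym -{1}(cat_take_drop i E) (drop_nth i0) ?HE //.
  have HD : drop i.+1 E = drop i.+1 (take j.+1 E) ++ drop j.+1 E.
    by rewrite -drop_cat_le ?cat_take_drop // size_takel ?HE.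
  rewrite /l perm_cat2l HD.
  by rewrite catA cats1 perm_sym perm_rcons.
rewrite /T' -(@reindex_word _ _ alpha _ (fun u => ((nth mu u w.-1 == mu)%:R : k) *:
   (P (drop j (take w.-1 u)) * symseq x (take j (take w.-1 u)))) _ Hp); apply: eq_bigr => s _.
rewrite /l !map_cat !map_drop !map_take /= (nth_map i0) ?HE //.
set v := wd s E.
have Hv : size v = w by rewrite size_wd.
have HA : size (take i v) = i by rewrite size_takel // Hv ltnW.
have HB : size (drop i.+1 (take j.+1 v)) = (j - i)%N.
  by rewrite size_drop size_takel ?Hv // subSS.
have HC : size (drop j.+1 v) = (w - j.+1)%N by rewrite size_drop Hv.
have Hsum : (size ((take i v ++ drop i.+1 (take j.+1 v)) ++ drop j.+1 v) = w.-1)%N.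
  rewrite !size_cat HA HB HC.
  move/leP: Hij => Hij'; move/ltP: Hjw => Hjw'; rewrite -?plusE -?minusE; lia.
rewrite !catA nth_cat Hsum ltnn subnn /=.
rewrite (take_size_cat _ Hsum).
have HAB : size (take i v ++ drop i.+1 (take j.+1 v)) = j.
  rewrite size_cat HA HB; move/leP: Hij => Hij'; rewrite -?plusE -?minusE; lia.
by rewrite take_size_cat // drop_size_cat.
Qed.


Lemma W_succ j : (j < w)%N -> W j.+1 = T' j *+ j.+1.
Proof.
move=> Hjw; rewrite W_sym //.
transitivity (\sum_(i < j.+1) T' j); last by rewrite sumr_const card_ord.
rewrite (eq_bigr (fun s : 'S_w => \sum_(i < j.+1) ((nth mu (wd s E) i == mu)%:R : k) *:
   (P (drop j.+1 (wd s E)) *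
    symseq x (take i (wd s E) ++ drop i.+1 (take j.+1 (wd s E)))))).
  rewrite exchange_big; apply: eq_bigr => i _; apply: move_i => //.
  by rewrite -ltnS.
move=> s _; rewrite (@Dsym' _ j) ?size_takel ?size_wd // mulr_sumr.
apply: eq_bigr => i _; rewrite -scalerAr nth_take // take_takel //.
exact: ltnW.
Qed.

Lemma split_e (v : seq 'I_n) j : size v = w -> (j <= w.-1)%N ->
  [/\ take j (take w.-1 v) = take j v,
      drop j (take w.-1 v) = take (w.-1 - j) (drop j v) &
      nth mu v w.-1 = nth mu (drop j v) (w.-1 - j)].
Proof.
move=> Hv Hj; split.
- by rewrite take_takel.
- by rewrite take_drop subnK.
- by rewrite nth_drop subnKC.
Qed.

Lemma unsym1 j : (j < w)%N ->
  T' j = \sum_(s : 'S_w) ((nth mu (wd s E) w.-1 == mu)%:R : k) *: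
     (P (drop j (take w.-1 (wd s E))) * P (take j (take w.-1 (wd s E)))).
Proof.
move=> Hjw; have Hj : (j <= w.-1)%N by rewrite -ltnS (ltn_predK Hjw).
pose G c d := ((nth mu d (w.-1 - j) == mu)%:R : k) *: (P (take (w.-1 - j) d) * P c).
have -> : \sum_(s : 'S_w) ((nth mu (wd s E) w.-1 == mu)%:R : k) *:
     (P (drop j (take w.-1 (wd s E))) * P (take j (take w.-1 (wd s E))))
   = \sum_(s : 'S_w) G (take j (wd s E)) (drop j (wd s E)).
  apply: eq_bigr => s _.
  by case: (@split_e _ j (size_wd s) Hj) => -> -> ->.
apply: (scalerI (@fact_neq0 k char0 j)).
have -> : j`!%:R *: \sum_(s : 'S_w) G (take j (wd s E)) (drop j (wd s E))
   = \sum_(t : 'S_j) \sum_(s : 'S_w) G (take j (wd s E)) (drop j (wd s E)).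
  by rewrite sumr_const card_Sn scaler_nat.
rewrite (eq_bigr (fun t : 'S_j => \sum_(s : 'S_w)
   G [seq nth mu (take j (wd s E)) (t i) | i <- enum 'I_j] (drop j (wd s E)))); last first.
  by move=> t _; rewrite (@avg j t G) // ltnW.
rewrite exchange_big /T' scaler_sumr; apply: eq_bigr => s _.
case: (@split_e _ j (size_wd s) Hj) => -> -> ->.
rewrite scalerA mulrC -scalerA scalerAr.
rewrite -(@sym_sum k U n x char0 mu) ?size_takel ?size_wd ?(ltnW Hjw) //.
by rewrite mulr_sumr scaler_sumr; apply: eq_bigr => t _.
Qed.


Lemma unsym2 j : (j < w)%N ->
  \sum_(s : 'S_w) ((nth mu (wd s E) w.-1 == mu)%:R : k) *:
     (P (drop j (take w.-1 (wd s E))) * P (take j (take w.-1 (wd s E)))) = T.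
Proof.
move=> Hjw.
pose l := rot j (take w.-1 E) ++ drop w.-1 E.
have Hp : perm_eq l E.
  by rewrite perm_sym -{1}(cat_take_drop w.-1 E) perm_cat2r perm_sym perm_rot.
rewrite /T -(@reindex_word _ _ alpha _ (fun u => ((nth mu u w.-1 == mu)%:R : k) *:
   P (take w.-1 u)) _ Hp); apply: eq_bigr => s _.
rewrite /l map_cat map_rot map_take map_drop.
have He : size (take w.-1 (wd s E)) = w.-1 by rewrite size_takel // size_wd leq_pred.
rewrite take_size_cat ?size_rot // nth_cat size_rot He ltnn subnn nth_drop addn0.
by rewrite /rot P_cat.
Qed.

Lemma W_val j : (j <= w)%N -> W j = T *+ j.
Proof.
case: j => [|j] Hj; first by rewrite W0.
by rewrite W_succ // unsym1 // unsym2.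
Qed.


Lemma mterm m : size m = w ->
  \sum_(s : 'S_w) ((-1) ^+ count negb m : k) *:
     (P (rev (mask (map negb m) (wd s E))) * D (P (mask m (wd s E)) * 1))
  = ((-1) ^+ count negb m : k) *: W (count id m).
Proof.
move=> Hm; rewrite -scaler_sumr; congr (_ *: _).
have HmE : size m = size E by rewrite size_enum_ord.
pose l := mask m E ++ rev (mask (map negb m) E).
have Hp : perm_eq l E.
  apply/seq.permP => p; rewrite /l count_cat count_rev -count_cat.
  by move/seq.permP: (@perm_mask_cat _ _ _ HmE) => ->.
rewrite /W -(@reindex_word _ _ alpha _ (fun u => P (drop (count id m) u) *
   D (P (take (count id m) u))) _ Hp); apply: eq_bigr => s _.
have Hms : size m = size (wd s E) by rewrite size_wd.
by rewrite /l map_cat map_rev !map_mask take_size_cat ?drop_size_cat ?size_mask ?mulr1.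
Qed.

Lemma final_sum : (2 <= w)%N ->
  \sum_(s : 'S_w) foldl (commx x) D (wd s E) 1 = 0.
Proof.
move=> hw.
under eq_bigr do rewrite expand size_wd.
rewrite exchange_big /=.
transitivity (\sum_(m <- bits w) (((-1) ^+ count negb m : k) *+ count id m) *: T).
  apply: eq_big_seq => m Hm; have Hsm := @size_bits _ _ Hm.
  rewrite mterm // W_val; last by rewrite -Hsm count_size.
  by rewrite -scalerMnr scalerMnl.
by rewrite -scaler_suml sign_sum // scale0r.
Qed.

End Main.

Theorem lemma4p6
  (k : fieldType) (char0 : [pchar k] =i pred0)
  (n : nat) (C : 'I_n -> 'I_n -> 'I_n -> k)
  (C_anti : forall a b c, C a b c = - C b a c)
  (C_jacobi : forall a b c e,
     \sum_(d < n) (C a b d * C d c e + C b c d * C d a e + C c a d * C d b e) = 0)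
  (U : algType k) (x : 'I_n -> U)
  (x_comm : forall a b, x a * x b - x b * x a = \sum_(c < n) C a b c *: x c)
  (pbw_span : forall u : U, exists l : seq (seq 'I_n * k),
     u = \sum_(p <- l) p.2 *: symseq x p.1)
  (pbw_indep : forall l : seq (seq 'I_n * k),
     uniq [seq monkey p.1 | p <- l] ->
     \sum_(p <- l) p.2 *: symseq x p.1 = 0 ->
     all (fun p => p.2 == 0) l)
  (mu : 'I_n) (D : {linear U -> U})
  (D_def : forall (m : nat) (t : m.+1.-tuple 'I_n),
     D (symprod x t) = \sum_(i < m.+1) (tnth t i == mu)%:R *: symprod x (dropi t i))
  (D_one : D 1 = 0)
  (w : nat) (hw : (2 <= w)%N) (alpha : 'I_w -> 'I_n) :
  \sum_(s : 'S_w) nested_comm x D [seq alpha (s i) | i <- enum 'I_w] 1 = 0.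
Proof.
have Hw0 : (0 < w)%N by apply: leq_trans hw.
rewrite /nested_comm.
exact: (@final_sum k U n x char0 mu D D_def D_one w alpha (Ordinal Hw0) hw).
Qed.
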